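(* Let $(R,\cdot,\alpha)$ be a non-unital hom-associative ring, let $\sigma,\delta\colon R\to R$ be left $R$-additive maps, extend $\alpha$ homogeneously to $R[X;\sigma,\delta]$, and suppose $R[X;\sigma,\delta]$ is hom-associative with this twisting map. Then for all $a,b,c\in R$: $$(a\cdot b)\cdot\delta(\alpha(c))=(a\cdot b)\cdot\alpha(\delta(c)),\qquad (a\cdot b)\cdot\sigma(\alpha(c))=(a\cdot b)\cdot\alpha(\sigma(c)),$$ $$\alpha(a)\cdot\delta(b\cdot c)=\alpha(a)\cdot\big(\delta(b)\cdot c+\sigma(b)\cdot\delta(c)\big),\qquad \alpha(a)\cdot\sigma(b\cdot c)=\alpha(a)\cdot\big(\sigma(b)\cdot\sigma(c)\big).$$
   Context: A hom-associative ring is a triple $(R,\cdot,\alpha)$ where $R$ is an abelian group with a biadditive (not necessarily associative or unital) multiplication $\cdot$ and an additive map $\alpha\colon R\to R$ satisfying $\alpha(a)\cdot(b\cdot c)=(a\cdot b)\cdot\alpha(c)$ for all $a,b,c$. $\mathbb{N}$ denotes the non-negative integers. A map $\beta\colon R\to R$ is left $R$-additive if $r\cdot\beta(s+t)=r\cdot(\beta(s)+\beta(t))$ for all $r,s,t\in R$. For $m\in\mathbb{N}$ and $0\le i\le m$, $\pi_i^m\colon R\to R$ denotes the sum of all $\binom{m}{i}$ compositions of $i$ copies of $\sigma$ and $m-i$ copies of $\delta$ in arbitrary order ($\pi_0^0=\mathrm{id}_R$), and $\pi_i^m:=0$ if $i<0$ or $i>m$. The non-unital, non-associative Ore extension $R[X;\sigma,\delta]$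 is the set of formal sums $\sum_{i\in\mathbb{N}}a_iX^i$ with $a_i\in R$, finitely many nonzero, with coefficientwise addition and the distributive multiplication determined by $aX^m\cdot bX^n=\sum_{i\in\mathbb{N}}(a\cdot\pi_i^m(b))X^{i+n}$. The homogeneous extension of $\alpha$ is $\alpha\left(\sum_ia_iX^i\right):=\sum_i\alpha(a_i)X^i$. *)

(* Defs.v *)
From HB Require Import structures.
From mathcomp Require Import all_boot all_order all_algebra.
Set Implicit Arguments. Unset Strict Implicit. Unset Printing Implicit Defensive.
Import GRing.Theory.
Local Open Scope ring_scope.

Section OreDefs.
Variable R : zmodType.
Variable mul : R -> R -> R.
Variables sigma delta : R -> R.

Definition left_R_additive (beta : R -> R) : Prop :=
  forall r s t : R, mul r (beta (s + t)) = mul r (beta s + beta t).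

Definition comp_word (w : seq bool) (x : R) : R :=
  foldr (fun b y => if b then sigma y else delta y) x w.

Definition pi_map (m i : nat) (x : R) : R :=
  \sum_(w : m.-tuple bool | count id w == i) comp_word w x.

(* Elements of R[X;sigma,delta] are coefficient sequences p (p`_i is the
   coefficient of X^i).  Formal sums only contain terms with nonzero
   coefficients, so products of monomials are only formed for nonzero
   coefficients. *)
Definition ore_coef (p q : seq R) (k : nat) : R :=
  \sum_(m < size p) \sum_(n < size q) \sum_(i < m.+1 | (i + n)%N == k)
     (if (p`_m == 0) || (q`_n == 0) then 0 else mul p`_m (pi_map m i q`_n)).

Definition ore_mul (p q : seq R) : seq R := mkseq (ore_coef p q) (size p + size q).

Definition ore_eq (p q : seq R) : Prop := forall k, p`_k = q`_k.

Definition ore_alpha (alpha : R -> R) (p : seq R) : seq R := map alpha p.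

Definition ore_hom_assoc (alpha : R -> R) : Prop :=
  forall p q r : seq R,
    ore_eq (ore_mul (ore_alpha alpha p) (ore_mul q r))
           (ore_mul (ore_mul p q) (ore_alpha alpha r)).
End OreDefs.

Definition hom_assoc_ring (R : zmodType) (mul : R -> R -> R) (alpha : R -> R) : Prop :=
  [/\ (forall a b c, mul (a + b) c = mul a c + mul b c),
      (forall a b c, mul a (b + c) = mul a b + mul a c),
      (forall a b, alpha (a + b) = alpha a + alpha b)
    & (forall a b c, mul (alpha a) (mul b c) = mul (mul a b) (alpha c))].

(* Main.v *)
Require Import Defs.
From mathcomp Require Import all_boot all_order all_algebra.
Import GRing.Theory.
Local Open Scope ring_scope.

Section S.
Variable R : zmodType.
Variable mul : R -> R -> R.
Variables alpha sigma delta : R -> R.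

Lemma pi00 x : pi_map sigma delta 0 0 x = x.
Proof.
rewrite /pi_map (big_pred1 [tuple]) //.
by move=> w; case: w => [[|] //= Hw]; rewrite eqxx; apply/esym/eqP; apply: val_inj.
Qed.
Lemma pi10 x : pi_map sigma delta 1 0 x = delta x.
Proof.
rewrite /pi_map (big_pred1 [tuple false]) //.
move=> w; case: w => [[|b [|]] //= Hw].
by case: b; rewrite /= ?eqxx //; apply/eqP; case.
Qed.
Lemma pi11 x : pi_map sigma delta 1 1 x = sigma x.
Proof.
rewrite /pi_map (big_pred1 [tuple true]) //.
move=> w; case: w => [[|b [|]] //= Hw].
by case: b; rewrite /= ?eqxx //; apply/eqP; case.
Qed.
End S.
Section M.
Variable R : zmodType.
Variable mul : R -> R -> R.
Variables alpha sigma delta : R -> R.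
Hypothesis mDl : forall a b c, mul (a + b) c = mul a c + mul b c.
Hypothesis mDr : forall a b c, mul a (b + c) = mul a b + mul a c.
Hypothesis sA : left_R_additive mul sigma.
Hypothesis dA : left_R_additive mul delta.
Hypothesis hA : forall a b c, mul (alpha a) (mul b c) = mul (mul a b) (alpha c).
Hypothesis aD : forall a b, alpha (a + b) = alpha a + alpha b.
Hypothesis H : ore_hom_assoc mul sigma delta alpha.

Lemma mul0r' x : mul 0 x = 0.
Proof. by apply/(@addrI _ (mul 0 x)); rewrite -mDl !addr0. Qed.
Lemma mulr0' x : mul x 0 = 0.
Proof. by apply/(@addrI _ (mul x 0)); rewrite -mDr !addr0. Qed.
Lemma muls0 x : mul x (sigma 0) = 0.
Proof. by apply/(@addrI _ (mul x (sigma 0))); rewrite -mDr -sA !addr0. Qed.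
Lemma muld0 x : mul x (delta 0) = 0.
Proof. by apply/(@addrI _ (mul x (delta 0))); rewrite -mDr -dA !addr0. Qed.

Lemma skip m i x y : (m <= 1)%N -> (i <= m)%N ->
  (if (x == 0) || (y == 0) then 0 else mul x (pi_map sigma delta m i y))
  = mul x (pi_map sigma delta m i y).
Proof.
case: m => [|[|//]] _; case: i => [|[|//]] // _;
rewrite ?pi00 ?pi10 ?pi11; case: eqP => [->|_]; rewrite ?mul0r' //=;
case: eqP => [->|_]; by rewrite ?mulr0' ?muls0 ?muld0.
Qed.

Lemma sumc n (P : 'I_n.+1 -> bool) (F : 'I_n.+1 -> R) :
  \sum_(i < n.+1 | P i) F i = \sum_(i < n | P (widen_ord (leqnSn n) i)) F (widen_ord (leqnSn n) i) + (if P ord_max then F ord_max else 0).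
Proof. by rewrite big_mkcond big_ord_recr /= -big_mkcond. Qed.

Ltac simp := rewrite /ore_mul /ore_alpha /ore_coef /=; do 4 (rewrite ?sumc ?big_ord0 /=);
  rewrite ?add0r ?addr0 ?eqxx /=; rewrite ?skip //; rewrite ?orbT /= ?pi00 ?pi10 ?pi11 ?add0r ?addr0 ?mul0r' ?mulr0' ?add0r ?addr0.

Lemma main (a b c : R) :
    [/\ mul (mul a b) (delta (alpha c)) = mul (mul a b) (alpha (delta c)),
        mul (mul a b) (sigma (alpha c)) = mul (mul a b) (alpha (sigma c)),
        mul (alpha a) (delta (mul b c)) =
          mul (alpha a) (mul (delta b) c + mul (sigma b) (delta c))
      & mul (alpha a) (sigma (mul b c)) = mul (alpha a) (mul (sigma b) (sigma c))].
Proof.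
have a0 : alpha 0 = 0 by apply/(@addrI _ (alpha 0)); rewrite -aD !addr0.
have S1 x y z : mul (mul x y) (delta (alpha z)) = mul (mul x y) (alpha (delta z)).
  have := H [:: x] [:: 0; y] [:: z] 0. simp. by move=> <-; rewrite hA.
have S2 x y z : mul (mul x y) (sigma (alpha z)) = mul (mul x y) (alpha (sigma z)).
  have := H [:: x] [:: 0; y] [:: z] 1. simp. by move=> <-; rewrite hA.
split => //.
  have := H [:: 0; a] [:: b] [:: c] 0. simp. rewrite a0 mul0r' add0r => ->.
  by rewrite S1 -!hA mDr addrC.
have := H [:: 0; a] [:: b] [:: c] 1. simp. move=> ->.
by rewrite S2 -!hA.
Qed.
End M.

Theorem mainTheorem6 (R : zmodType) (mul : R -> R -> R) (alpha sigma delta : R -> R) :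
  hom_assoc_ring mul alpha ->
  left_R_additive mul sigma ->
  left_R_additive mul delta ->
  ore_hom_assoc mul sigma delta alpha ->
  forall a b c : R,
    [/\ mul (mul a b) (delta (alpha c)) = mul (mul a b) (alpha (delta c)),
        mul (mul a b) (sigma (alpha c)) = mul (mul a b) (alpha (sigma c)),
        mul (alpha a) (delta (mul b c)) =
          mul (alpha a) (mul (delta b) c + mul (sigma b) (delta c))
      & mul (alpha a) (sigma (mul b c)) = mul (alpha a) (mul (sigma b) (sigma c))].
Proof.
move=> [mDl mDr aD hA] sA dA H a b c.
have := @main R mul alpha sigma delta mDl mDr sA dA hA aD H a b c. exact.
Qed.
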